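(* In any PIR scheme (for any fixed desired index) on the multigraph-based PIR system, let $S_i$ and $S_j$ be two distinct servers that share the set of $r$ files $\mathcal{W}_{i,j}$. Then, with $\mathcal{Q}=\{Q_1,\dots,Q_N\}$, $$H(A_i)+H(A_j)\ \ge\ H(A_i\mid \mathcal{W}\setminus\mathcal{W}_{i,j},\mathcal{Q})+H(A_j\mid \mathcal{W}\setminus\mathcal{W}_{i,j},\mathcal{Q})\ \ge\ \left(1+\frac12+\cdots+\frac1{2^{r-1}}\right)L.$$
   Context: Multigraph-based PIR model. There are $N$ non-colluding servers $S_1,\dots,S_N$. Let $G$ be a simple graph on vertex set $\{S_1,\dots,S_N\}$ with $K'$ edges, and $G^{(r)}$ the $r$-multigraph obtained by replacing each edge by $r$ parallel edges. There are $K=rK'$ files, each independent and uniform on $\mathbb{F}_2^{L}$ (so $H(W)=L$ for each file $W$); for each edge of $G$, a distinct set of $r$ files is stored exactly on its two endpoints. $\mathcal{W}$ is the set of all files, $\mathcal{W}_{S_i}$ the set of files on $S_i$, and $\mathcal{W}_{i,j}$ the set of $r$ files stored on both $S_i$ and $S_j$. In a PIR scheme, a user privately chooses a desired file index $\theta$ and generates queries $Q_1,\dots,Q_N$ independent of all files; answer $A_i$ is a deterministic function of $Q_i$ and $\mathcal{W}_{S_i}$. Reliability: $H(W_\theta\mid A_1,\dots,A_N,Q_1,\dots,Q_N)=0$. Privacy: for every server $i$ and every $\theta$, the distribution of $(Q_i^{(\theta)},A_i^{(\theta)},\mathcal{W}_{S_i})$ does not depend on $\theta$. *)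

(* Defs.v *)
From HB Require Import structures.
From Stdlib Require Import Reals.
From mathcomp Require Import all_boot all_order all_algebra.
From mathcomp Require Import Rstruct.

Set Implicit Arguments.
Unset Strict Implicit.
Unset Printing Implicit Defensive.
Import Order.TTheory GRing.Theory Num.Theory.

Local Open Scope ring_scope.

(** Logarithm in base 2 (entropies are measured in bits, so H(W) = L). *)
Definition log2 (x : R) : R := (ln x / ln 2)%R.

Section Entropy.
Variables (Omega : finType) (P : Omega -> R).

Definition prob_eq (T : finType) (X : Omega -> T) (x : T) : R :=
  \sum_(w : Omega | X w == x) P w.

(** Shannon entropy (bits), with the convention 0 log 0 = 0. *)
Definition entropy (T : finType) (X : Omega -> T) : R :=
  - \sum_(x : T | 0 < prob_eq X x) prob_eq X x * log2 (prob_eq X x).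

Definition cond_entropy (T1 T2 : finType) (X : Omega -> T1) (Y : Omega -> T2) : R :=
  \sum_(xy : T1 * T2 | 0 < prob_eq (fun w => (X w, Y w)) xy)
     prob_eq (fun w => (X w, Y w)) xy *
     log2 (prob_eq Y xy.2 / prob_eq (fun w => (X w, Y w)) xy).
End Entropy.

(** Files are indexed by 'I_K' * 'I_r: file (e,k) is the k-th of the
    r files attached to edge e (so K = r K').  A file is an element of F_2^L,
    represented as {ffun 'I_L -> bool}. *)

Definition simple_graph (N K' : nat) (ends : 'I_K' -> 'I_N * 'I_N) : Prop :=
  (forall e, (ends e).1 != (ends e).2) /\
  (forall e e', ((ends e == ends e') ||
                 (ends e == ((ends e').2, (ends e').1))) -> e = e').

Definition fileT (L : nat) := {ffun 'I_L -> bool}.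
Definition filesT (K' r L : nat) := {ffun 'I_K' * 'I_r -> fileT L}.

Definition stored (N K' r : nat) (ends : 'I_K' -> 'I_N * 'I_N)
    (f : 'I_K' * 'I_r) (s : 'I_N) : bool :=
  (s == (ends f.1).1) || (s == (ends f.1).2).

Definition restrict (K' r L : nat) (S : pred ('I_K' * 'I_r)) (w : filesT K' r L)
  : {ffun 'I_K' * 'I_r -> option (fileT L)} :=
  [ffun f => if S f then Some (w f) else None].

(** The probability space: user randomness u : U (distribution pU), independent
    of the files, which are i.i.d. uniform on F_2^L. *)
Definition jointP (U : finType) (pU : U -> R) (K' r L : nat)
    (om : U * filesT K' r L) : R :=
  pU om.1 / #|{: filesT K' r L}|%:R.

Definition answer_local (N K' r L : nat) (ends : 'I_K' -> 'I_N * 'I_N)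
    (QT AT : finType) (A : 'I_N -> QT -> filesT K' r L -> AT) : Prop :=
  forall (n : 'I_N) (q : QT) (w w' : filesT K' r L),
    (forall f, stored ends f n -> w f = w' f) -> A n q w = A n q w'.

(* Main.v *)
Require Import Defs.
From HB Require Import structures.
From Stdlib Require Import Reals.
From mathcomp Require Import all_boot all_order all_algebra.
From mathcomp Require Import Rstruct.
From mathcomp Require Import ring lra.
Import Order.TTheory GRing.Theory Num.Theory.
Local Open Scope ring_scope.


Definition cl2 : R := (ln (IZR (Zpos (xO xH))))^-1.

Lemma cl2_gt0 : 0 < cl2.
Proof.
rewrite /cl2 invr_gt0; apply/RltP.
apply: Rlt_trans (ln_lt_2); apply: Rinv_0_lt_compat; apply: IZR_lt; reflexivity.
Qed.

Lemma log2E x : log2 x = ln x * cl2.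
Proof. by []. Qed.

Lemma lnM a b : 0 < a -> 0 < b -> ln (a * b) = ln a + ln b.
Proof. by move=> /RltP ha /RltP hb; exact: ln_mult. Qed.

Lemma lnV a : 0 < a -> ln (a^-1) = - ln a.
Proof. by move=> /RltP ha; exact: ln_Rinv. Qed.

Lemma ln_le a b : 0 < a -> a <= b -> ln a <= ln b.
Proof.
move=> ha; rewrite le_eqVlt => /orP[/eqP -> //|hab].
apply/RleP; apply: Rlt_le; apply: ln_increasing; apply/RltP => //.
Qed.

Lemma ln_sub1 a : 0 < a -> ln a <= a - 1.
Proof.
move=> /RltP ha; have := exp_ineq1_le (ln a); rewrite exp_ln // => /RleP h.
by rewrite lerBrDl.
Qed.

Lemma log2M a b : 0 < a -> 0 < b -> log2 (a * b) = log2 a + log2 b.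
Proof. by move=> ha hb; rewrite !log2E lnM // mulrDl. Qed.

Lemma log2V a : 0 < a -> log2 (a^-1) = - log2 a.
Proof. by move=> ha; rewrite !log2E lnV // mulNr. Qed.

Lemma log2_le a b : 0 < a -> a <= b -> log2 a <= log2 b.
Proof. by move=> ha hab; rewrite !log2E ler_wpM2r ?ln_le // ltW // cl2_gt0. Qed.

Lemma log2_sub1 a : 0 < a -> log2 a <= (a - 1) * cl2.
Proof. by move=> ha; rewrite log2E ler_wpM2r ?ln_sub1 // ltW // cl2_gt0. Qed.

Lemma log2_1 : log2 1 = 0.
Proof. by rewrite log2E ln_1 mul0r. Qed.

Lemma log2_frac (a b p c : R) : 0 < a -> 0 < b -> 0 < p -> 0 < c ->
  log2 (a * b * (p * c)^-1) = log2 a + log2 b - log2 p - log2 c.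
Proof.
move=> ha hb hp hc.
have hab : 0 < a * b by rewrite mulr_gt0.
have hpc : 0 < p * c by rewrite mulr_gt0.
rewrite (log2M (a * b) ((p * c)^-1) hab); last by rewrite invr_gt0.
rewrite (log2V (p * c) hpc) (log2M a b ha hb) (log2M p c hp hc); ring.
Qed.


Set Implicit Arguments.
Unset Strict Implicit.
Unset Printing Implicit Defensive.


Section Ent.
Variables (Omega : finType) (P : Omega -> R).
Hypothesis P0 : forall w, 0 <= P w.
Hypothesis P1 : \sum_w P w = 1.

Local Notation pr := (prob_eq P).
Local Notation H := (entropy P).

Lemma pr_ge0 (T : finType) (X : Omega -> T) x : 0 <= pr X x.
Proof. by apply: sumr_ge0 => w _; exact: P0. Qed.

Lemma pr_comp (T1 T2 : finType) (X : Omega -> T1) (Y : Omega -> T2) (g : T1 -> T2) :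
  (forall w, Y w = g (X w)) -> forall y, pr Y y = \sum_(x | g x == y) pr X x.
Proof.
move=> HY y; rewrite /prob_eq.
rewrite (partition_big X (fun x => g x == y)) /=; last by move=> w; rewrite HY.
apply: eq_bigr => x /eqP gx; apply: eq_bigl => w.
rewrite HY; case: (X w =P x) => [->|]; first by rewrite gx !eqxx.
by rewrite andbF.
Qed.

Lemma pr_sum1 (T : finType) (X : Omega -> T) : \sum_x pr X x = 1.
Proof.
rewrite -P1 (partition_big X xpredT) //=.
Qed.

Lemma pr_le (T1 T2 : finType) (X : Omega -> T1) (Y : Omega -> T2) (g : T1 -> T2) :
  (forall w, Y w = g (X w)) -> forall x, pr X x <= pr Y (g x).
Proof.
move=> HY x; rewrite (pr_comp HY) (bigD1 x) //= lerDl.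
by apply: sumr_ge0 => x' _; exact: pr_ge0.
Qed.

Lemma HE (T : finType) (X : Omega -> T) : H X = - \sum_x pr X x * log2 (pr X x).
Proof.
rewrite /entropy; congr (- _).
rewrite [RHS](bigID (fun x => 0 < pr X x)) /= [X in _ = _ + X]big1 ?addr0 // => x.
by rewrite lt_def pr_ge0 andbT negbK => /eqP ->; rewrite mul0r.
Qed.

Lemma sum_comp (T1 T2 : finType) (X : Omega -> T1) (Y : Omega -> T2) (g : T1 -> T2)
  (F : T2 -> R) : (forall w, Y w = g (X w)) ->
  \sum_y pr Y y * F y = \sum_x pr X x * F (g x).
Proof.
move=> HY; symmetry; rewrite (partition_big g xpredT) //=; apply: eq_bigr => y _.
rewrite (pr_comp HY) mulr_suml; apply: eq_bigr => x /eqP <- //.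
Qed.

Lemma H_comp (T1 T2 : finType) (X : Omega -> T1) (Y : Omega -> T2) (g : T1 -> T2) :
  (forall w, Y w = g (X w)) ->
  H Y = - \sum_x pr X x * log2 (pr Y (g x)).
Proof.
by move=> HY; rewrite HE (sum_comp (fun y => log2 (pr Y y)) HY).
Qed.

Lemma H_mono (T1 T2 : finType) (X : Omega -> T1) (Y : Omega -> T2) (g : T1 -> T2) :
  (forall w, Y w = g (X w)) -> H Y <= H X.
Proof.
move=> HY; rewrite (H_comp HY) HE lerN2; apply: ler_sum => x _.
have := pr_ge0 X x; rewrite le_eqVlt => /orP[/eqP <-|hp]; first by rewrite !mul0r.
by rewrite ler_wpM2l ?(ltW hp) // log2_le // (pr_le HY).
Qed.

Lemma H_eq (T1 T2 : finType) (X : Omega -> T1) (Y : Omega -> T2) g h :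
  (forall w, X w = g (Y w)) -> (forall w, Y w = h (X w)) -> H X = H Y.
Proof. by move=> h1 h2; apply/le_anti; rewrite (H_mono h1) (H_mono h2). Qed.

Lemma npos0 (T : finType) (X : Omega -> T) x : ~~ (0 < pr X x) -> pr X x = 0.
Proof. by rewrite lt_def pr_ge0 andbT negbK => /eqP. Qed.

Lemma CH_E (T1 T2 : finType) (X : Omega -> T1) (Y : Omega -> T2) :
  cond_entropy P X Y = H (fun w => (X w, Y w)) - H Y.
Proof.
set XY := fun w => (X w, Y w).
have hs : forall w, Y w = snd (XY w) by [].
rewrite (H_comp hs) (HE XY) /cond_entropy.
transitivity (\sum_xy (pr XY xy * log2 (pr Y xy.2) - pr XY xy * log2 (pr XY xy))); last first.
  by rewrite big_split sumrN /=; ring.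
rewrite [RHS](bigID (fun xy => 0 < pr XY xy)) /= [X in _ = _ + X]big1 ?addr0; last first.
  by move=> xy /npos0 ->; rewrite !mul0r subrr.
apply: eq_bigr => xy hp.
have hy : 0 < pr Y xy.2 by apply: lt_le_trans hp (pr_le hs xy).
rewrite log2M ?invr_gt0 // log2V //; ring.
Qed.

Lemma H_ge_pair (T1 T2 : finType) (X : Omega -> T1) (Y : Omega -> T2) :
  H Y <= H (fun w => (X w, Y w)).
Proof. by apply: (H_mono (g := snd)). Qed.

Lemma marg (T1 T2 : finType) (X : Omega -> T1) (Z : Omega -> T2) z :
  \sum_x pr (fun w => (X w, Z w)) (x, z) = pr Z z.
Proof.
rewrite /prob_eq [RHS](partition_big X xpredT) //=; apply: eq_bigr => x _.
by apply: eq_bigl => w; rewrite xpair_eqE andbC.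
Qed.

Lemma sum_pair (T1 T2 : finType) (F : T1 * T2 -> R) :
  \sum_t F t = \sum_x \sum_y F (x, y).
Proof. by rewrite pair_big; apply: eq_bigr => -[]. Qed.

Lemma submod (T1 T2 T3 : finType) (X : Omega -> T1) (Y : Omega -> T2) (Z : Omega -> T3) :
  H (fun w => (X w, Y w, Z w)) + H Z <= H (fun w => (X w, Z w)) + H (fun w => (Y w, Z w)).
Proof.
pose V := fun w => (X w, Y w, Z w).
pose XZ := fun w => (X w, Z w).
pose YZ := fun w => (Y w, Z w).
rewrite -/V -/XZ -/YZ.
pose g1 := fun t : T1 * T2 * T3 => t.2.
pose g2 := fun t : T1 * T2 * T3 => (t.1.1, t.2).
pose g3 := fun t : T1 * T2 * T3 => (t.1.2, t.2).
have h1 : forall w, Z w = g1 (V w) by [].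
have h2 : forall w, XZ w = g2 (V w) by [].
have h3 : forall w, YZ w = g3 (V w) by [].
rewrite (H_comp h1) (H_comp h2) (H_comp h3) (HE V) /=.
set p := pr V.
set a := fun t : T1 * T2 * T3 => pr XZ (t.1.1, t.2).
set b := fun t : T1 * T2 * T3 => pr YZ (t.1.2, t.2).
set c := fun t : T1 * T2 * T3 => pr Z t.2.
have term : forall t, p t * log2 (a t) + p t * log2 (b t) - p t * log2 (p t)
     - p t * log2 (c t) <= (a t * b t / c t - p t) * cl2.
  move=> t; have := pr_ge0 V t; rewrite le_eqVlt => /orP[/eqP hp|hp].
    rewrite /p -hp !mul0r !subr0 addr0 mulr_ge0 ?(ltW cl2_gt0) //.
    by rewrite divr_ge0 ?mulr_ge0 ?pr_ge0.
  have ha : 0 < a t by apply: lt_le_trans hp (pr_le h2 t).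
  have hb : 0 < b t by apply: lt_le_trans hp (pr_le h3 t).
  have hc : 0 < c t by apply: lt_le_trans hp (pr_le h1 t).
  have -> : p t * log2 (a t) + p t * log2 (b t) - p t * log2 (p t) - p t * log2 (c t)
     = p t * log2 (a t * b t * (p t * c t)^-1).
    by rewrite log2_frac //; ring.
  have -> : (a t * b t / c t - p t) * cl2 = p t * ((a t * b t * (p t * c t)^-1 - 1) * cl2).
    by field; rewrite ?lt0r_neq0 //; apply/andP; split; rewrite lt0r_neq0.
  by rewrite ler_wpM2l ?(ltW hp) // log2_sub1 // !(mulr_gt0, invr_gt0).
have sum1 : \sum_t a t * b t / c t = 1.
  rewrite (sum_pair (fun t => a t * b t / c t)) /=.
  rewrite (sum_pair (fun xy => \sum_z a (xy, z) * b (xy, z) / c (xy, z))) /=.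
  rewrite (eq_bigr (fun x => \sum_z \sum_y a (x, y, z) * b (x, y, z) / c (x, y, z)));
    last by move=> x _; rewrite exchange_big.
  rewrite exchange_big /=.
  transitivity (\sum_z pr Z z); last exact: pr_sum1.
  apply: eq_bigr => z _; rewrite /a /b /c /=.
  transitivity ((\sum_x pr XZ (x, z)) * (\sum_y pr YZ (y, z)) / pr Z z).
    rewrite mulr_suml big_distrl /=; apply: eq_bigr => x _.
    by rewrite mulr_sumr big_distrl /=; apply: eq_bigr => y _.
  rewrite /XZ /YZ !marg.
  have [->|hz] := eqVneq (pr Z z) 0; first by rewrite !mul0r.
  by rewrite mulfK.
have hh : \sum_t (p t * log2 (a t) + p t * log2 (b t) - p t * log2 (p t) - p t * log2 (c t))
   <= \sum_t (a t * b t / c t - p t) * cl2 by apply: ler_sum => t _; exact: term.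
have e0 : \sum_t (a t * b t / c t - p t) * cl2 = 0.
  by rewrite -mulr_suml sumrB sum1 pr_sum1 subrr mul0r.
rewrite e0 in hh.
rewrite !sumrB !big_split /= in hh.
rewrite /a /b /c /g1 /g2 /g3 /= in hh *; lra.
Qed.

Lemma marg2 (T1 T2 : finType) (X : Omega -> T1) (Z : Omega -> T2) x :
  \sum_z pr (fun w => (X w, Z w)) (x, z) = pr X x.
Proof.
rewrite /prob_eq [RHS](partition_big Z xpredT) //=; apply: eq_bigr => z _.
Qed.

Lemma marg_mid (T1 T2 T3 : finType) (X : Omega -> T1) (Y : Omega -> T2) (Z : Omega -> T3) y z :
  \sum_x pr (fun w => (X w, Y w, Z w)) (x, y, z) = pr (fun w => (Y w, Z w)) (y, z).
Proof.
rewrite /prob_eq [RHS](partition_big X xpredT) //=; apply: eq_bigr => x _.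
apply: eq_bigl => w; rewrite !xpair_eqE; by case: (X w == x); case: (Y w == y); case: (Z w == z).
Qed.

Lemma condH_mono (T1 T2 T3 : finType) (W : Omega -> T1) (V : Omega -> T2) (B : Omega -> T3)
  (g : T2 -> T3) : (forall w, B w = g (V w)) ->
  H (fun w => (W w, V w)) - H V <= H (fun w => (W w, B w)) - H B.
Proof.
move=> hB.
have e1 : H (fun w => (W w, V w)) = H (fun w => (W w, V w, B w)).
  apply: (@H_eq _ _ _ _ (fun t : T1 * T2 * T3 => t.1) (fun t : T1 * T2 => (t, g t.2))) => w //.
  by rewrite /= hB.
have e2 : H V = H (fun w => (V w, B w)).
  apply: (@H_eq _ _ _ _ (fun t : T2 * T3 => t.1) (fun t : T2 => (t, g t))) => w //.
  by rewrite /= hB.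
rewrite e1 e2; have := submod W V B; lra.
Qed.

Lemma markov (T1 T2 T3 : finType) (X : Omega -> T1) (Y : Omega -> T2) (Z : Omega -> T3)
  (F : T1 -> T2 -> R) (G : T2 -> T3 -> R) :
  (forall x y z, pr (fun w => (X w, Y w, Z w)) (x, y, z) = F x y * G y z) ->
  H (fun w => (X w, Y w, Z w)) - H (fun w => (Y w, Z w)) =
  H (fun w => (X w, Y w)) - H Y.
Proof.
move=> hF.
pose V := fun w => (X w, Y w, Z w).
pose XY := fun w => (X w, Y w).
pose YZ := fun w => (Y w, Z w).
rewrite -/V -/XY -/YZ.
pose g1 := fun t : T1 * T2 * T3 => t.1.2.
pose g2 := fun t : T1 * T2 * T3 => t.1.
pose g3 := fun t : T1 * T2 * T3 => (t.1.2, t.2).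
have h1 : forall w, Y w = g1 (V w) by [].
have h2 : forall w, XY w = g2 (V w) by [].
have h3 : forall w, YZ w = g3 (V w) by [].
rewrite (H_comp h1) (H_comp h2) (H_comp h3) (HE V) /=.
have hXY : forall x y, pr XY (x, y) = F x y * \sum_z G y z.
  by move=> x y; rewrite -(marg2 XY Z) big_distrr /=; apply: eq_bigr => z _; rewrite -hF.
have hYZ : forall y z, pr YZ (y, z) = (\sum_x F x y) * G y z.
  by move=> y z; rewrite -(marg_mid X Y Z) big_distrl /=; apply: eq_bigr => x _; rewrite -hF.
have hY : forall y, pr Y y = (\sum_x F x y) * \sum_z G y z.
  move=> y; rewrite -(marg2 Y Z) big_distrr /=; apply: eq_bigr => z _.
  by rewrite hYZ.
suff : \sum_t pr V t * log2 (pr V t) - \sum_t pr V t * log2 (pr YZ (g3 t)) =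
       \sum_t pr V t * log2 (pr XY (g2 t)) - \sum_t pr V t * log2 (pr Y (g1 t)) by lra.
rewrite -!sumrB; apply: eq_bigr => -[[x y] z] _.
have := pr_ge0 V (x, y, z); rewrite le_eqVlt => /orP[/eqP <-|hp]; first by rewrite !mul0r subrr.
have ha : 0 < pr XY (g2 (x, y, z)) by apply: lt_le_trans hp (pr_le h2 _).
have hb : 0 < pr YZ (g3 (x, y, z)) by apply: lt_le_trans hp (pr_le h3 _).
have hc : 0 < pr Y (g1 (x, y, z)) by apply: lt_le_trans hp (pr_le h1 _).
have key : pr V (x, y, z) * pr Y y = pr XY (x, y) * pr YZ (y, z).
  by rewrite hF hY hXY hYZ; ring.
have hl := congr1 log2 key.
rewrite /g1 /g2 /g3 /= in ha hb hc *.
rewrite (log2M _ _ hp hc) (log2M _ _ ha hb) in hl.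
rewrite -!mulrBr; congr (_ * _); lra.
Qed.

Lemma H_indep (T1 T2 : finType) (X : Omega -> T1) (W : Omega -> T2) :
  (forall x b, pr (fun w => (X w, W w)) (x, b) = pr X x * pr W b) ->
  H (fun w => (X w, W w)) = H X + H W.
Proof.
move=> hI; rewrite !HE sum_pair.
have term : forall x b, pr (fun w => (X w, W w)) (x, b) * log2 (pr (fun w => (X w, W w)) (x, b))
   = pr W b * (pr X x * log2 (pr X x)) + pr X x * (pr W b * log2 (pr W b)).
  move=> x b; rewrite hI.
  have := pr_ge0 X x; rewrite le_eqVlt => /orP[/eqP <-|hx]; first by rewrite !(mul0r, mulr0) addr0.
  have := pr_ge0 W b; rewrite le_eqVlt => /orP[/eqP <-|hb]; first by rewrite !(mul0r, mulr0) addr0.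
  by rewrite log2M //; ring.
under eq_bigr do under eq_bigr do rewrite term.
under eq_bigr do rewrite big_split /= -!mulr_sumr -mulr_suml pr_sum1 mul1r.
rewrite big_split /= -mulr_suml pr_sum1 mul1r; lra.
Qed.

Lemma H_dist (T T1 : finType) (X : Omega -> T) (X' : Omega -> T) (Y : Omega -> T1)
  (Y' : Omega -> T1) (g : T -> T1) :
  (forall t, pr X t = pr X' t) -> (forall w, Y w = g (X w)) -> (forall w, Y' w = g (X' w)) ->
  H Y = H Y'.
Proof.
move=> hd h1 h2; rewrite !HE; congr (- _); apply: eq_bigr => y _.
suff -> : pr Y y = pr Y' y by [].
by rewrite (pr_comp h1) (pr_comp h2); apply: eq_bigr => t _; rewrite hd.
Qed.

End Ent.


Lemma log2_pow2 (L : nat) : log2 ((2 ^ L)%N%:R) = L%:R.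
Proof.
have h2 : (2%:R : R) = IZR (Zpos (xO xH)) by rewrite IZRposE INRE.
rewrite natrX h2 -RpowE log2E.
have hp := Rlt_0_2.
rewrite (ln_pow _ hp) INRE /cl2 -mulrA mulfV ?mulr1 //.
rewrite -h2; apply/eqP => h.
have := cl2_gt0; rewrite /cl2 -h2 h invr0 ltxx //.
Qed.

Lemma merge_sum (I : finType) (V : finType) (S : pred I) (phi psi : {ffun I -> V} -> R) :
  (forall w w' : {ffun I -> V}, (forall f, S f -> w f = w' f) -> phi w = phi w') ->
  (forall w w' : {ffun I -> V}, (forall f, ~~ S f -> w f = w' f) -> psi w = psi w') ->
  (\sum_w phi w * psi w) * #|{: {ffun I -> V}}|%:R = (\sum_w phi w) * (\sum_w psi w).
Proof.
move=> hphi hpsi.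
pose mrg (a b : {ffun I -> V}) := [ffun f => if S f then a f else b f].
pose sg (p : {ffun I -> V} * {ffun I -> V}) := (mrg p.1 p.2, mrg p.2 p.1).
have sgK : involutive sg.
  move=> [a b]; rewrite /sg /=; congr (_, _); apply/ffunP => f; rewrite !ffunE;
  by case: (S f).
rewrite big_distrl [RHS]big_distrl /=.
rewrite [RHS](eq_bigr (fun w => \sum_w' phi w * psi w')); last by move=> w _; rewrite big_distrr.
rewrite -[RHS](sum_pair (fun p => phi p.1 * psi p.2)) [RHS](reindex_inj (inv_inj sgK)).
rewrite [RHS](sum_pair (fun p => phi (sg p).1 * psi (sg p).2)); symmetry.
apply: eq_bigr => a _.
rewrite (eq_bigr (fun _ => phi a * psi a)); last first.
  move=> b _; rewrite /sg /=; congr (_ * _).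
    by apply: hphi => f hf; rewrite /mrg ffunE hf.
  by apply: hpsi => f hf; rewrite /mrg ffunE (negbTE hf).
by rewrite sumr_const card_ffun mulr_natr.
Qed.


Section Model.
Variables (N K' r L : nat) (ends : 'I_K' -> 'I_N * 'I_N).
Variables (U QT AT : finType) (pU : U -> R).
Hypothesis HpU0 : forall u, 0 <= pU u.
Hypothesis HpU1 : \sum_(u : U) pU u = 1.

Local Notation F := (filesT K' r L).
Local Notation P := (@jointP U pU K' r L).
Local Notation pr := (prob_eq P).
Local Notation H := (entropy P).
Local Notation c := (#|{: F}|%:R : R).

Lemma cF_gt0 : 0 < c.
Proof.
rewrite ltr0n; apply/card_gt0P; by exists [ffun _ => [ffun _ => false]].
Qed.

Lemma cF_neq0 : c != 0.
Proof. by rewrite lt0r_neq0 // cF_gt0. Qed.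

Lemma P0 om : 0 <= P om.
Proof.
change (0 <= pU om.1 / c); by rewrite divr_ge0 // ltW // cF_gt0.
Qed.

Lemma sum_cF (x : R) : \sum_(w : F) x = x * c.
Proof. by rewrite sumr_const mulr_natr. Qed.

Lemma prE (T : finType) (X : U * F -> T) x :
  pr X x = \sum_u \sum_w pU u / c * (X (u, w) == x)%:R.
Proof.
rewrite /prob_eq big_mkcond (sum_pair (fun om => if X om == x then P om else 0)) /=.
apply: eq_bigr => u _; apply: eq_bigr => w _.
by case: (X (u, w) == x); rewrite ?mulr1 ?mulr0.
Qed.

Lemma P1 : \sum_om P om = 1.
Proof.
rewrite (sum_pair (fun om => P om)) /= -HpU1; apply: eq_bigr => u _.
change (\sum_(w : F) pU u / c = pU u).
by rewrite sum_cF divfK // cF_neq0.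
Qed.

Section Th.
Variable th : 'I_K' * 'I_r.

Definition cb (b : fileT L) : R := \sum_(w : F) (w th == b)%:R.

Lemma cb_const b b' : cb b = cb b'.
Proof.
pose d := [ffun l => b l (+) b' l].
pose tau (w : F) : F := [ffun f => if f == th then [ffun l => w f l (+) d l] else w f].
have tauK : involutive tau.
  move=> w; apply/ffunP => f; rewrite !ffunE; case: (f == th) => //.
  by apply/ffunP => l; rewrite !ffunE addbK.
rewrite /cb (reindex_inj (inv_inj tauK)); apply: eq_bigr => w _.
congr ((_ : bool)%:R); rewrite ffunE eqxx.
apply/eqP/eqP => h; apply/ffunP => l; move/ffunP: h => /(_ l); rewrite !ffunE => h.
  by move: h; case: (w th l); case: (b l); case: (b' l).
by move: h; case: (w th l); case: (b l); case: (b' l).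
Qed.

Lemma card_fileT : #|{: fileT L}| = (2 ^ L)%N.
Proof. by rewrite card_ffun card_bool card_ord. Qed.

Lemma cbE b : cb b = c / (2 ^ L)%N%:R.
Proof.
have hs : \sum_(b' : fileT L) cb b' = c.
  rewrite /cb exchange_big /= -sumr_const; apply: eq_bigr => w _.
  by rewrite (bigD1 (w th)) //= eqxx big1 ?addr0 // => b' /negbTE; rewrite eq_sym => ->.
have : \sum_(b' : fileT L) cb b' = cb b * (2 ^ L)%N%:R.
  by rewrite (eq_bigr (fun _ => cb b)) ?sumr_const ?card_fileT ?mulr_natr // => b' _; exact: cb_const.
rewrite hs => ->; rewrite mulfK // pnatr_eq0 expn_eq0 //.
Qed.

Lemma prW b : pr (fun om => om.2 th) b = (2 ^ L)%N%:R^-1.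
Proof.
rewrite prE.
rewrite (eq_bigr (fun u => pU u / c * cb b)); last first.
  by move=> u _; rewrite /cb big_distrr.
rewrite -big_distrl /= -big_distrl /= HpU1 mul1r cbE mulrA mulVf ?mul1r // cF_neq0.
by [].
Qed.

Lemma HW : H (fun om => om.2 th) = L%:R.
Proof.
rewrite (HE P0) (eq_bigr (fun _ => (2 ^ L)%N%:R^-1 * - L%:R)); last first.
  by move=> b _; rewrite prW log2V ?log2_pow2 // ltr0n expn_gt0.
rewrite sumr_const card_fileT.
have hm : (2 ^ L)%N%:R != 0 :> R by rewrite pnatr_eq0 expn_eq0.
rewrite -mulNrn -mulr_natr -mulNrn -mulr_natr; field => //.
Qed.

Lemma pr_indep (T : finType) (X : U * F -> T) :
  (forall u (w w' : F), (forall f, f != th -> w f = w' f) -> X (u, w) = X (u, w')) ->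
  forall x b, pr (fun om => (X om, om.2 th)) (x, b) = pr X x * pr (fun om => om.2 th) b.
Proof.
move=> hX x b; rewrite (prW b) !prE.
rewrite big_distrl /=; apply: eq_bigr => u _.
have hm := @merge_sum _ _ (pred1 th) (fun w : F => (w th == b)%:R) (fun w : F => (X (u, w) == x)%:R).
have {}hm : (\sum_(w : F) (w th == b)%:R * (X (u, w) == x)%:R) * c =
   cb b * \sum_(w : F) (X (u, w) == x)%:R.
  apply: hm.
  - by move=> w w' h; rewrite h //= eqxx.
  - by move=> w w' h; rewrite (hX u w w').
rewrite (eq_bigr (fun w : F => pU u / c * ((w th == b)%:R * (X (u, w) == x)%:R))); last first.
  by move=> w _; rewrite /= xpair_eqE; case: (X (u, w) == x); case: (w th == b); rewrite /= ?(mulr0, mulr1, mul0r).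
rewrite -!big_distrr /=.
have -> : \sum_(w : F) (w th == b)%:R * (X (u, w) == x)%:R = cb b * (\sum_(w : F) (X (u, w) == x)%:R) / c.
  by rewrite -hm mulfK // cF_neq0.
rewrite cbE.
have hm2 : (2 ^ L)%N%:R != 0 :> R by rewrite pnatr_eq0 expn_eq0.
have := cF_neq0; move=> hc.
field; by apply/andP.
Qed.

End Th.

Lemma split_eq (I : finType) (T : eqType) (d : T) (S : pred I) (c1 c2 : {ffun I -> T}) :
  (c1 == c2) = ([ffun f => if S f then c1 f else d] == [ffun f => if S f then c2 f else d])
            && ([ffun f => if S f then d else c1 f] == [ffun f => if S f then d else c2 f]).
Proof.
apply/eqP/andP => [->|[/eqP h1 /eqP h2]]; first by [].
apply/ffunP => f; move/ffunP: h1 => /(_ f); move/ffunP: h2 => /(_ f); rewrite !ffunE.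
by case: (S f).
Qed.

Lemma sum_unit (G : unit -> R) : \sum_x G x = G tt.
Proof. by rewrite (big_pred1 tt) // => -[]. Qed.

Lemma H_const : H (fun _ : U * F => tt) = 0.
Proof.
rewrite (HE P0) sum_unit.
have -> : pr (fun _ : U * F => tt) tt = 1.
  by rewrite -(pr_sum1 P1 (fun _ : U * F => tt)) sum_unit.
by rewrite log2_1 mulr0 oppr0.
Qed.

Lemma CH_le_H (T1 T2 : finType) (X : U * F -> T1) (Y : U * F -> T2) :
  cond_entropy P X Y <= H X.
Proof.
rewrite (CH_E P0).
have := @condH_mono _ _ P0 P1 _ _ _ X Y (fun _ : U * F => tt) (fun _ => tt) (fun _ => erefl).
rewrite H_const subr0.
have -> : H (fun w => (X w, tt)) = H X.
  by apply: (H_eq P0 (g := fun t => (t, tt)) (h := fun t : T1 * unit => t.1)) => w.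
by [].
Qed.

Lemma CH_ge0 (T1 T2 : finType) (X : U * F -> T1) (Y : U * F -> T2) :
  0 <= cond_entropy P X Y.
Proof. by rewrite (CH_E P0) subr_ge0 (H_ge_pair P0). Qed.

Variable Q : 'I_K' * 'I_r -> 'I_N -> U -> QT.
Variable A : 'I_N -> QT -> F -> AT.
Hypothesis Hloc : answer_local ends A.
Variable e : 'I_K'.

Definition qu (th : 'I_K' * 'I_r) (u : U) : {ffun 'I_N -> QT} := [ffun n => Q th n u].
Definition ans th n (om : U * F) : AT := A n (Q th n om.1) om.2.
Definition pk (k : nat) (f : 'I_K' * 'I_r) : bool := (f.1 != e) || (f.2 < k)%N.
Definition Ck k (om : U * F) := restrict (pk k) om.2.
Definition Dv th k (om : U * F) := (Ck k om, qu th om.1).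
Definition Tq th n k := cond_entropy P (ans th n) (Dv th k).

Definition mS (S : pred ('I_K' * 'I_r)) (c' : {ffun 'I_K' * 'I_r -> option (fileT L)}) :
  {ffun 'I_K' * 'I_r -> option (fileT L)} := [ffun f => if S f then c' f else None].
Definition mN (S : pred ('I_K' * 'I_r)) (c' : {ffun 'I_K' * 'I_r -> option (fileT L)}) :
  {ffun 'I_K' * 'I_r -> option (fileT L)} := [ffun f => if S f then None else c' f].

Section Priv.
Variable n : 'I_N.
Local Notation stn := (fun f => stored ends f n).

Definition locw k (w : F) := mS (pk k) (restrict stn w).
Definition Yv th k (om : U * F) := (locw k om.2, Q th n om.1).
Definition yof (d : {ffun 'I_K' * 'I_r -> option (fileT L)} * {ffun 'I_N -> QT}) :=
  (mS stn d.1, d.2 n).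

Lemma Yv_of th k om : Yv th k om = yof (Dv th k om).
Proof.
rewrite /Yv /yof /Dv /qu /=; congr (_, _); last by rewrite ffunE.
apply/ffunP => f; rewrite /locw /mS /Ck /restrict !ffunE.
by case: (pk k f); case: (stn f).
Qed.

Lemma mS_restrict k (w : F) : mS stn (restrict (pk k) w) = locw k w.
Proof.
apply/ffunP => f; rewrite /locw /mS /restrict !ffunE.
by case: (pk k f); case: (stn f).
Qed.

Lemma key_bool th k (u : U) (w : F) x y z :
  (((A n (Q th n u) w, (locw k w, Q th n u)), (restrict (pk k) w, qu th u)) == ((x, y), z))
  = [&& (Q th n u == y.2) && (qu th u == z.2), (A n y.2 w == x) && (locw k w == y.1),
        mS stn z.1 == y.1 & mN stn (restrict (pk k) w) == mN stn z.1].
Proof.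
case: y z => y1 y2 [z1 z2] /=.
rewrite !xpair_eqE (split_eq None stn (restrict (pk k) w) z1) -/(mS stn _) -/(mS stn z1).
rewrite -/(mN stn _) -/(mN stn z1) mS_restrict.
case: (Q th n u =P y2) => [->|hq] /=; last by rewrite !andbF.
rewrite andbT.
case: (locw k w =P y1) => [->|hl] /=; last by rewrite !andbF.
rewrite [y1 == _]eq_sym.
by case: (A n y2 w == x); case: (mS stn z1 == y1); case: (qu th u == z2);
   case: (mN stn _ == _).
Qed.

Lemma Tq_loc th k :
  Tq th n k = H (fun om => (ans th n om, Yv th k om)) - H (Yv th k).
Proof.
rewrite /Tq (CH_E P0).
have e1 : H (fun om => (ans th n om, Dv th k om)) =
          H (fun om => (ans th n om, Yv th k om, Dv th k om)).
  apply: (H_eq P0 (g := fun t => (t.1.1, t.2)) (h := fun t => (t.1, yof t.2, t.2))) => om //=.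
  by rewrite Yv_of.
have e2 : H (Dv th k) = H (fun om => (Yv th k om, Dv th k om)).
  apply: (H_eq P0 (g := fun t => t.2) (h := fun t => (yof t, t))) => om //=.
  by rewrite Yv_of.
rewrite e1 e2.
pose Fx (x : AT) (y : {ffun 'I_K' * 'I_r -> option (fileT L)} * QT) : R :=
  \sum_(w : F) ((A n y.2 w == x) && (locw k w == y.1))%:R.
pose Gy (y : {ffun 'I_K' * 'I_r -> option (fileT L)} * QT)
        (z : {ffun 'I_K' * 'I_r -> option (fileT L)} * {ffun 'I_N -> QT}) : R :=
  (\sum_u pU u / c * ((Q th n u == y.2) && (qu th u == z.2))%:R) * (mS stn z.1 == y.1)%:R
  * (\sum_(w : F) (mN stn (restrict (pk k) w) == mN stn z.1)%:R) / c.
apply: (markov P0 (F := Fx) (G := Gy)) => x y z.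
rewrite prE.
have hm := @merge_sum _ _ stn (fun w : F => ((A n y.2 w == x) && (locw k w == y.1))%:R)
   (fun w : F => (mN stn (restrict (pk k) w) == mN stn z.1)%:R).
have {}hm : (\sum_(w : F) ((A n y.2 w == x) && (locw k w == y.1))%:R *
    (mN stn (restrict (pk k) w) == mN stn z.1)%:R) * c = Fx x y *
    \sum_(w : F) (mN stn (restrict (pk k) w) == mN stn z.1)%:R.
  apply: hm.
  - move=> w w' h; congr ((_ : bool)%:R); congr (_ && _).
      by rewrite (Hloc y.2 h).
    congr (_ == _); apply/ffunP => f; rewrite /locw /mS /restrict !ffunE.
    by case hf: (stn f); rewrite ?h ?andbF.
  - move=> w w' h; congr ((_ : bool)%:R); congr (_ == _).
    apply/ffunP => f; rewrite /mN /restrict !ffunE.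
    by case hf: (stn f) => //; rewrite h ?hf.
rewrite (eq_bigr (fun u => pU u / c * ((Q th n u == y.2) && (qu th u == z.2))%:R *
   (mS stn z.1 == y.1)%:R * \sum_(w : F) ((A n y.2 w == x) && (locw k w == y.1))%:R *
    (mN stn (restrict (pk k) w) == mN stn z.1)%:R)); last first.
  move=> u _; rewrite !big_distrr /=; apply: eq_bigr => w _.
  rewrite /ans /Yv /Dv /Ck /= key_bool.
  by case: ((Q th n u == y.2) && (qu th u == z.2)); case: (mS stn z.1 == y.1);
     case: ((A n y.2 w == x) && (locw k w == y.1)); case: (mN stn _ == _);
     rewrite /= ?(mulr0, mulr1, mul0r).
rewrite -!big_distrl /=.
have -> : \sum_(w : F) ((A n y.2 w == x) && (locw k w == y.1))%:R *
    (mN stn (restrict (pk k) w) == mN stn z.1)%:R = Fx x y *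
    (\sum_(w : F) (mN stn (restrict (pk k) w) == mN stn z.1)%:R) / c.
  by rewrite -hm mulfK // cF_neq0.
rewrite /Gy; ring.
Qed.


Lemma Tq_priv k th th' :
  (forall x, pr (fun om => (Q th n om.1, A n (Q th n om.1) om.2,
                     restrict (fun f => stored ends f n) om.2)) x =
             pr (fun om => (Q th' n om.1, A n (Q th' n om.1) om.2,
                     restrict (fun f => stored ends f n) om.2)) x) ->
  Tq th n k = Tq th' n k.
Proof.
move=> hp; rewrite !Tq_loc; congr (_ - _).
  by apply: (H_dist P0 (g := fun t : QT * AT * {ffun 'I_K' * 'I_r -> option (fileT L)} =>
       (t.1.2, (mS (pk k) t.2, t.1.1))) hp (fun om => erefl) (fun om => erefl)).
by apply: (H_dist P0 (g := fun t : QT * AT * {ffun 'I_K' * 'I_r -> option (fileT L)} =>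
       (mS (pk k) t.2, t.1.1)) hp (fun om => erefl) (fun om => erefl)).
Qed.

End Priv.

Section Rec.
Variables i j : 'I_N.
Hypothesis Hij : ends e = (i, j).

Definition dflt : fileT L := [ffun _ => false].
Definition recon (c' : {ffun 'I_K' * 'I_r -> option (fileT L)}) : F :=
  [ffun f => odflt dflt (c' f)].
Definition upd th (c' : {ffun 'I_K' * 'I_r -> option (fileT L)}) (b : fileT L) :
  {ffun 'I_K' * 'I_r -> option (fileT L)} := [ffun f => if f == th then Some b else c' f].

Lemma stored_off k n f : n != i -> n != j -> stored ends f n -> pk k f.
Proof.
move=> hi hj; rewrite /stored /pk; case: (f.1 =P e) => [->|] //=.
by rewrite Hij /= (negbTE hi) (negbTE hj).
Qed.

Lemma rec_step k (hk : (k < r)%N) :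
  let th := (e, Ordinal hk) in
  cond_entropy P (fun om => om.2 th)
       (fun om => ([ffun n => A n (Q th n om.1) om.2], [ffun n => Q th n om.1])) = 0 ->
  L%:R + (Tq th i k.+1 + Tq th j k.+1) / 2 <= Tq th i k + Tq th j k.
Proof.
move=> th hrel.
have pk_th : pk k th = false by rewrite /pk /th /= eqxx ltnn.
have pk1_th : pk k.+1 th by rewrite /pk /th /= ltnSn orbT.
have pk1 : forall f, f != th -> pk k.+1 f = pk k f.
  move=> [f1 f2] hf; rewrite /pk /= ltnS leq_eqVlt.
  case: (f1 =P e) => [ef|nf] //=; case: (f2 =P Ordinal hk :> 'I_r) => [ef2|nf2].
    by move: hf; rewrite /th ef ef2 eqxx.
  suff -> : (f2 == k :> nat) = false by [].
  by apply/eqP => h; apply: nf2; apply: val_inj.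
have pkS : forall f, pk k f -> pk k.+1 f.
  by move=> f; rewrite /pk ltnS => /orP[->|/ltnW ->]; rewrite ?orbT.
have Cup : forall om, Ck k.+1 om = upd th (Ck k om) (om.2 th).
  move=> om; apply/ffunP => f; rewrite /Ck /upd /restrict !ffunE.
  case: (f =P th) => [->|/eqP nf]; first by rewrite pk1_th.
  by rewrite pk1.
have Cdown : forall om, Ck k om = mS (pk k) (Ck k.+1 om).
  move=> om; apply/ffunP => f; rewrite /Ck /mS /restrict !ffunE.
  by case hf: (pk k f); rewrite ?(pkS _ hf).
have Wof : forall om : U * F, om.2 th = odflt dflt (Ck k.+1 om th).
  by move=> om; rewrite /Ck /restrict ffunE pk1_th.
pose ai := ans th i; pose aj := ans th j.
pose Dk := Dv th k; pose Dk1 := Dv th k.+1.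
pose W := fun om : U * F => om.2 th.
pose Ball := fun om : U * F => ([ffun n => A n (Q th n om.1) om.2], [ffun n => Q th n om.1]).
pose V := fun om => (ai om, aj om, Dk om).
pose gB := fun t : AT * AT * ({ffun 'I_K' * 'I_r -> option (fileT L)} * {ffun 'I_N -> QT}) =>
  ([ffun n => if n == i then t.1.1 else if n == j then t.1.2 else A n (t.2.2 n) (recon t.2.1)],
   t.2.2).
have hB : forall om, Ball om = gB (V om).
  move=> [u w]; rewrite /Ball /gB /V /ai /aj /ans /Dk /Dv /qu /=; congr (_, _).
  apply/ffunP => n; rewrite !ffunE.
  case: (n =P i) => [->|/eqP ni] //; case: (n =P j) => [->|/eqP nj] //.
  apply: Hloc => f hf; rewrite /recon /Ck /restrict !ffunE /=.
  by rewrite (stored_off k ni nj hf).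
have R1 := condH_mono P0 P1 W hB.
have hr : H (fun om => (W om, Ball om)) - H Ball = 0 by rewrite -(CH_E P0); exact: hrel.
have R2 : H (fun om => (W om, V om)) = H (fun om => (ai om, aj om, Dk1 om)).
  apply: (H_eq P0
   (g := fun t : AT * AT * ({ffun 'I_K' * 'I_r -> option (fileT L)} * {ffun 'I_N -> QT}) =>
      (odflt dflt (t.2.1 th), (t.1, (mS (pk k) t.2.1, t.2.2))))
   (h := fun t : fileT L * (AT * AT * ({ffun 'I_K' * 'I_r -> option (fileT L)} * {ffun 'I_N -> QT})) =>
      (t.2.1, (upd th t.2.2.1 t.1, t.2.2.2)))) => om.
    by rewrite /W /V /Dk /Dk1 /Dv /= -Cdown -Wof.
  by rewrite /W /V /Dk /Dk1 /Dv /= -Cup.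
have R3 : H Dk1 = H Dk + L%:R.
  have -> : H Dk1 = H (fun om => (Dk om, W om)).
    apply: (H_eq P0
      (g := fun t : ({ffun 'I_K' * 'I_r -> option (fileT L)} * {ffun 'I_N -> QT}) * fileT L =>
         (upd th t.1.1 t.2, t.1.2))
      (h := fun t : {ffun 'I_K' * 'I_r -> option (fileT L)} * {ffun 'I_N -> QT} =>
         ((mS (pk k) t.1, t.2), odflt dflt (t.1 th)))) => om.
      by rewrite /W /Dk /Dk1 /Dv /= -Cup.
    by rewrite /W /Dk /Dk1 /Dv /= -Cdown -Wof.
  rewrite (H_indep P0 P1); first by rewrite HW.
  apply: pr_indep => u w w' h; rewrite /Dk /Dv /Ck /=; congr (_, _).
  apply/ffunP => f; rewrite /restrict !ffunE.
  case hf: (pk k f) => //; rewrite h //; apply/eqP => ef; by rewrite ef pk_th in hf.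
have R4 := submod P0 P1 ai aj Dk.
have R5a : H (fun om => (ai om, Dk1 om)) <= H (fun om => (ai om, aj om, Dk1 om)).
  by apply: (H_mono P0 (g := fun t : AT * AT * _ => (t.1.1, t.2))).
have R5b : H (fun om => (aj om, Dk1 om)) <= H (fun om => (ai om, aj om, Dk1 om)).
  by apply: (H_mono P0 (g := fun t : AT * AT * _ => (t.1.2, t.2))).
rewrite /Tq !(CH_E P0) -/ai -/aj -/Dk -/Dk1.
rewrite R2 in R1.
lra.
Qed.

Hypothesis Hrel : forall th : 'I_K' * 'I_r,
  cond_entropy P (fun om => om.2 th)
       (fun om => ([ffun n => A n (Q th n om.1) om.2], [ffun n => Q th n om.1])) = 0.
Hypothesis Hpriv : forall (n : 'I_N) (th th' : 'I_K' * 'I_r)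
                  (x : QT * AT * {ffun 'I_K' * 'I_r -> option (fileT L)}),
     pr (fun om => (Q th n om.1, A n (Q th n om.1) om.2,
                   restrict (fun f => stored ends f n) om.2)) x =
     pr (fun om => (Q th' n om.1, A n (Q th' n om.1) om.2,
                   restrict (fun f => stored ends f n) om.2)) x.

Lemma Tsum_inv k th th' : Tq th i k + Tq th j k = Tq th' i k + Tq th' j k.
Proof. by rewrite (Tq_priv k (Hpriv i th th')) (Tq_priv k (Hpriv j th th')). Qed.

Lemma bound m : (m <= r)%N -> forall th,
  (\sum_(t < m) (2^-1) ^+ t) * L%:R <= Tq th i (r - m) + Tq th j (r - m).
Proof.
elim: m => [|m IH] hm th.
  by rewrite big_ord0 mul0r addr_ge0 // CH_ge0.
have hk : (r - m.+1 < r)%N by rewrite ltn_subrL; apply/andP; split => //; apply: leq_trans hm.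
have hk1 : (r - m.+1).+1 = (r - m)%N by rewrite subnSK.
rewrite (Tsum_inv _ th (e, Ordinal hk)).
have hs := @rec_step _ hk (Hrel (e, Ordinal hk)).
rewrite hk1 in hs.
have := IH (ltnW hm) (e, Ordinal hk) => hi.
rewrite big_ord_recl /=.
have -> : \sum_(t < m) (2^-1 : R) ^+ (bump 0 t) = 2^-1 * \sum_(t < m) (2^-1) ^+ t.
  by rewrite mulr_sumr; apply: eq_bigr => t _; rewrite /bump /= exprS.
have h2 : (2^-1 : R) = 1 / 2 by rewrite mul1r.
rewrite h2 expr0 in hi *.
move: hs hi; set s := \sum_(t < m) _; set a := Tq _ i _ + Tq _ j _; set b := Tq _ i _ + Tq _ j _.
move=> hs hi. lra.
Qed.

End Rec.


End Model.


Unset Implicit Arguments.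
Set Strict Implicit.


Theorem lemma1
  (N K' r L : nat) (ends : 'I_K' -> 'I_N * 'I_N)
  (Hsimple : simple_graph ends)
  (U QT AT : finType) (pU : U -> R)
  (HpU0 : forall u, 0 <= pU u) (HpU1 : \sum_(u : U) pU u = 1)
  (Q : 'I_K' * 'I_r -> 'I_N -> U -> QT)
  (A : 'I_N -> QT -> filesT K' r L -> AT)
  (Hloc : answer_local ends A)
  (Hrel : forall theta : 'I_K' * 'I_r,
     cond_entropy (@jointP U pU K' r L)
       (fun om => om.2 theta)
       (fun om => ([ffun n => A n (Q theta n om.1) om.2],
                   [ffun n => Q theta n om.1])) = 0)
  (Hpriv : forall (n : 'I_N) (theta theta' : 'I_K' * 'I_r)
                  (x : QT * AT * {ffun 'I_K' * 'I_r -> option (fileT L)}),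
     prob_eq (@jointP U pU K' r L)
       (fun om => (Q theta n om.1, A n (Q theta n om.1) om.2,
                   restrict (fun f => stored ends f n) om.2)) x =
     prob_eq (@jointP U pU K' r L)
       (fun om => (Q theta' n om.1, A n (Q theta' n om.1) om.2,
                   restrict (fun f => stored ends f n) om.2)) x)
  (theta : 'I_K' * 'I_r) (e : 'I_K') (i j : 'I_N)
  (Hij : ends e = (i, j)) :
  let P := @jointP U pU K' r L in
  let Ai := fun om : U * filesT K' r L => A i (Q theta i om.1) om.2 in
  let Aj := fun om : U * filesT K' r L => A j (Q theta j om.1) om.2 in
  let Z := fun om : U * filesT K' r L =>
             (restrict (fun f => f.1 != e) om.2, [ffun n => Q theta n om.1]) in
  entropy P Ai + entropy P Aj >= cond_entropy P Ai Z + cond_entropy P Aj Z /\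
  cond_entropy P Ai Z + cond_entropy P Aj Z >=
    (\sum_(k < r) (2^-1) ^+ k) * L%:R.
Proof.
move=> P Ai Aj Z.

have hZ : forall n, cond_entropy P (fun om => A n (Q theta n om.1) om.2) Z =
                    Tq pU Q A e theta n 0.
  move=> n; rewrite /Tq !(CH_E (P0 HpU0)).
  have eZ : forall om, Z om = Dv Q e theta 0 om.
    move=> om; rewrite /Z /Dv /Ck /qu; congr (_, _).
    by apply/ffunP => f; rewrite !ffunE /pk ltn0 orbF.
  congr (_ - _).
    by apply: (H_eq (P0 HpU0) (g := id) (h := id)) => om /=; rewrite eZ.
  by apply: (H_eq (P0 HpU0) (g := id) (h := id)) => om /=; rewrite eZ.
split.
  by apply: lerD; apply: CH_le_H.
rewrite /Ai /Aj !hZ.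
have := bound HpU0 HpU1 Hloc Hij Hrel Hpriv (leqnn r) theta.
by rewrite subnn.
Qed.
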